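(* Let $\Gamma$ be a $(c,t)$-sparse graph and let $0<\gamma<1$. Suppose $\pi_1$ and $\pi_2$ are probability measures on $V(\Gamma)$ such that $\pi_i(v)<\gamma/t$ for all $v\in V(\Gamma)$ and $i\in\{1,2\}$. Let $\mathcal{S}=\{S_v: v\in\mathrm{supp}(\pi_2)\}$ be a family of subsets of $V(\Gamma)$, each of size $|S_v|\ge t$. Let $$D(\pi_2,\mathcal{S})=\{x\in V(\Gamma): \pi_2(\{y\in V(\Gamma): |S_y\setminus N_\Gamma(x)|<c|S_y|\})<\sqrt{\gamma}\}.$$ Then $\Pr_{x\sim\pi_1}[x\in D(\pi_2,\mathcal{S})]>1-\sqrt{\gamma}$.
   Context: A graph $\Gamma$ is $(c,t)$-sparse if for every pair of (not necessarily disjoint) vertex subsets $A,B\subseteq V(\Gamma)$ with $|A|,|B|\ge t$ we have $e(A,B)\le (1-c)|A||B|$, where $e(A,B)$ counts ordered pairs $(a,b)\in A\times B$ with $\{a,b\}\in E(\Gamma)$. *)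

(* Defs.v *)
From mathcomp Require Import all_boot all_order all_algebra.
Set Implicit Arguments. Unset Strict Implicit. Unset Printing Implicit Defensive.
Import Order.TTheory GRing.Theory Num.Theory.
Local Open Scope ring_scope.

Definition simple_graph (T : finType) (g : rel T) : Prop :=
  (forall x, ~~ g x x) /\ (forall x y, g x y = g y x).

Definition nbhd (T : finType) (g : rel T) (x : T) : {set T} := [set y | g x y].

Definition edges_between (T : finType) (g : rel T) (A B : {set T}) : nat :=
  #|[set p in setX A B | g p.1 p.2]|.

Definition sparse (R : realFieldType) (T : finType) (g : rel T) (c t : R) : Prop :=
  forall A B : {set T}, t <= #|A|%:R -> t <= #|B|%:R ->
    (edges_between g A B)%:R <= (1 - c) * #|A|%:R * #|B|%:R.

Definition prob_measure (R : realFieldType) (T : finType) (pi : T -> R) : Prop :=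
  (forall v, 0 <= pi v) /\ \sum_(v : T) pi v = 1.

Definition measure_of (R : realFieldType) (T : finType) (pi : T -> R) (A : {set T}) : R :=
  \sum_(v in A) pi v.

Definition supp (R : realFieldType) (T : finType) (pi : T -> R) : {set T} :=
  [set v | 0 < pi v].

Definition Dset (R : rcfType) (T : finType) (g : rel T) (c gamma : R)
    (pi2 : T -> R) (S : T -> {set T}) : {set T} :=
  [set x | measure_of pi2
             [set y | #|S y :\: nbhd g x|%:R < c * #|S y|%:R] < Num.sqrt gamma].

(* Main.v *)
Require Import Defs.
From mathcomp Require Import all_boot all_order all_algebra.
From mathcomp Require Import ring lra.
Import Order.TTheory GRing.Theory Num.Theory.
Local Open Scope ring_scope.

Lemma avg_exists (R : realFieldType) (T : finType) (p f : T -> R) (a : R) :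
  (forall v, 0 <= p v) -> \sum_v p v = 1 -> a <= \sum_v p v * f v ->
  exists2 v, 0 < p v & a <= f v.
Proof.
move=> p0 p1 H.
case: (boolP [exists v, (0 < p v) && (a <= f v)]) => [/existsP [v /andP[h1 h2]]|/existsPn Hn].
  by exists v.
exfalso.
have [v0 pv0] : exists v0, 0 < p v0.
  case: (boolP [exists v, 0 < p v]) => [/existsP[v hv]|/existsPn hn]; first by exists v.
  move: p1; rewrite big1 => [/esym/eqP|v _]; first by rewrite oner_eq0.
  by apply/eqP; rewrite eq_le p0 andbT leNgt hn.
have : \sum_v p v * f v < \sum_v p v * a.
  rewrite (bigD1 v0) //= [X in _ < X](bigD1 v0) //=.
  apply: ltr_leD.
    rewrite ltr_pM2l //. by have := Hn v0; rewrite pv0 /= -ltNge.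
  apply: ler_sum => v _.
  have := Hn v; rewrite negb_and => /orP[h|h].
    have -> : p v = 0 by apply/eqP; rewrite eq_le p0 andbT leNgt h.
    by rewrite !mul0r.
  by apply: ler_wpM2l => //; rewrite ltW // ltNge.
by rewrite -big_distrl /= p1 mul1r ltNge H.
Qed.

Theorem lemma4p2 (R : rcfType) (T : finType) (g : rel T) (c t gamma : R)
    (pi1 pi2 : T -> R) (S : T -> {set T}) :
  simple_graph g ->
  sparse g c t ->
  0 < gamma -> gamma < 1 ->
  prob_measure pi1 -> prob_measure pi2 ->
  (forall v, pi1 v < gamma / t) ->
  (forall v, pi2 v < gamma / t) ->
  (forall v, v \in supp pi2 -> t <= #|S v|%:R) ->
  measure_of pi1 (Dset g c gamma pi2 S) > 1 - Num.sqrt gamma.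
Proof.
move=> _ Hsp g0 g1 [p10 p11] [p20 p21] h1 h2 hS.
set D := Dset g c gamma pi2 S.
set Y := fun x => [set y | #|S y :\: nbhd g x|%:R < c * #|S y|%:R].
rewrite ltNge; apply/negP => HD.
set B := ~: D.
have sq0 : 0 <= Num.sqrt gamma by apply: sqrtr_ge0.
have sqsq : Num.sqrt gamma * Num.sqrt gamma = gamma by rewrite -expr2 sqr_sqrtr // ltW.
have HB : Num.sqrt gamma <= measure_of pi1 B.
  have : measure_of pi1 D + measure_of pi1 B = 1.
    rewrite -p11 [RHS](bigID (mem D)) /=; congr (_ + _); apply: eq_bigl => v; by rewrite ?inE.
  lra.
have HXY : gamma <= \sum_(x in B) pi1 x * measure_of pi2 (Y x).
  apply: (@le_trans _ _ (\sum_(x in B) pi1 x * Num.sqrt gamma)).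
    by rewrite -big_distrl /= -[X in X <= _]sqsq ler_wpM2r.
  apply: ler_sum => x; rewrite inE => hx; apply: ler_wpM2l => //.
  by move: hx; rewrite /D /Dset inE -leNgt.
set A := fun y => [set x in B | y \in Y x].
have Hex : \sum_(x in B) pi1 x * measure_of pi2 (Y x) = \sum_y pi2 y * measure_of pi1 (A y).
  rewrite /measure_of.
  under eq_bigr do rewrite big_distrr.
  under [RHS]eq_bigr do rewrite big_distrr.
  rewrite big_mkcond.
  transitivity (\sum_x \sum_y (if (x \in B) && (y \in Y x) then pi1 x * pi2 y else 0)).
    apply: eq_bigr => x _.
    by case: (x \in B) => /=; [rewrite big_mkcond | rewrite big1].
  rewrite exchange_big /=; apply: eq_bigr => y _.
  rewrite [RHS]big_mkcond; apply: eq_bigr => x _.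
  by rewrite /A inE mulrC.
have HXY2 := HXY; rewrite Hex in HXY2.
have [y py Hy] := @avg_exists _ _ pi2 _ gamma p20 p21 HXY2.
have [x0 hx0] : exists x0, x0 \in A y.
  case: (set_0Vmem (A y)) => [E|[x hx]]; last by exists x.
  by move: Hy; rewrite E /measure_of big_set0; lra.
have tA : t <= #|A y|%:R.
  case: (lerP t 0) => ht; first by apply: le_trans ht _; exact: ler0n.
  have H : measure_of pi1 (A y) <= #|A y|%:R * (gamma / t).
    rewrite mulr_natl -sumr_const; apply: ler_sum => x _; exact: ltW.
  have := le_trans Hy H; rewrite mulrA ler_pdivlMr // => H'.
  by rewrite -(ler_pM2r g0) mulrC.
have tS : t <= #|S y|%:R by apply: hS; rewrite inE.
have Hs := Hsp (A y) (S y) tA tS.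
have Ee : (edges_between g (A y) (S y))%:R = \sum_(x in A y) (#|S y :&: nbhd g x|)%:R :> R.
  rewrite -natr_sum; congr (_%:R).
  rewrite /edges_between -sum1_card.
  under [RHS]eq_bigr do rewrite -sum1_card.
  rewrite pair_big_dep /=; apply: eq_bigl => -[a b]; rewrite /nbhd !inE /=.
  by rewrite andbA.
have Hlt : \sum_(x in A y) (1 - c) * #|S y|%:R < \sum_(x in A y) (#|S y :&: nbhd g x|)%:R :> R.
  have key : forall x, x \in A y -> (1 - c) * #|S y|%:R < (#|S y :&: nbhd g x|)%:R :> R.
    move=> x; rewrite inE => /andP[_]; rewrite inE => hY.
    have := cardsID (nbhd g x) (S y); move/(congr1 (fun n => n%:R : R)); rewrite natrD => E.
    rewrite mulrBl mul1r; lra.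
  rewrite (bigD1 x0) //= [X in _ < X](bigD1 x0) //=.
  apply: ltr_leD; first exact: key.
  by apply: ler_sum => x /andP[hx _]; apply/ltW/key.
rewrite -Ee sumr_const -(mulr_natr ((1 - c) * #|S y|%:R)) in Hlt.
have E2 : (1 - c) * #|A y|%:R * #|S y|%:R = (1 - c) * #|S y|%:R * #|A y|%:R by ring.
by move: (lt_le_trans Hlt Hs); rewrite E2 ltxx.
Qed.
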